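(* Let $G$ be a simple graph with $m\ge 1$ edges and $\mathcal{H}$-eigenvalues $\lambda_1\ge\lambda_2\ge\cdots\ge\lambda_m$. Let $G'$ be an induced subgraph of $G$ with $m'\ge 1$ edges and $\mathcal{H}$-eigenvalues $\lambda_1'\ge\lambda_2'\ge\cdots\ge\lambda_{m'}'$. Then for every $1\le i\le m'$, $$\lambda_i\ge\lambda_i'+\kappa_{\min}(G')\quad\text{and}\quad \lambda_i'+\kappa_{\max}(G')\ge\lambda_{m-m'+i}.$$
   Context: For an oriented edge $e$ write $e^-$ for its tail and $e^+$ for its head. For distinct edges $e,e'$: $e\leftrightarrow e'$ means $e^+=e'^-$ or $e'^+=e^-$; $e\overset{\pm}{\sim}e'$ means $e^+=e'^+$ or $e^-=e'^-$; $e\vartriangle e'$ means $e,e'$ are two edges of a common triangle of the graph. $\triangle_G(e)$ is the number of triangles of $G$ containing $e$. The Helmholtzian matrix $\mathcal{H}(G)=(h_{ee'})$ is indexed by the edges, with $h_{ee}=\triangle_G(e)+2$, and for $e\ne e'$: $h_{ee'}=-1$ if $e\leftrightarrow e'$ and not $e\vartriangle e'$; $h_{ee'}=1$ if $e\overset{\pm}{\sim}e'$ and not $e\vartriangle e'$; $h_{ee'}=0$ otherwise. The $\mathcal{H}$-eigenvalues of a graph are the eigenvalues of its Helmholtzian matrix for an arbitrary edge orientation (they do not depend on the orientation). For an induced subgraph $G'$ of $G$ and $e\in E(G')$, $\kappa_{G'}(e)=\triangle_G(e)-\triangle_{G'}(e)$, $\kappa_{\min}(G')=\min_{e\in E(G')}\kappa_{G'}(e)$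 and $\kappa_{\max}(G')=\max_{e\in E(G')}\kappa_{G'}(e)$. *)

(* Defs.v *)
From HB Require Import structures.
From mathcomp Require Import all_boot all_order all_algebra.
From mathcomp Require Import reals.
Set Implicit Arguments. Unset Strict Implicit. Unset Printing Implicit Defensive.
Import Order.TTheory GRing.Theory Num.Theory.

Definition simple_graph (V : finType) (adj : rel V) :=
  symmetric adj /\ irreflexive adj.

Definition orientation (V : finType) (adj : rel V) (o : rel V) :=
  (forall u v, o u v -> adj u v) /\
  (forall u v, adj u v -> o u v (+) o v u).

Definition oedges (V : finType) (adj o : rel V) : {set V * V} :=
  [set e : V * V | adj e.1 e.2 && o e.1 e.2].

Definition tail (V : finType) (e : V * V) := e.1.
Definition head (V : finType) (e : V * V) := e.2.

Definition ntri (V : finType) (adj : rel V) (e : V * V) : nat :=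
  #|[set w | adj e.1 w && adj e.2 w]|.

Definition lr_rel (V : finType) (e e' : V * V) : bool :=
  (head e == tail e') || (head e' == tail e).

Definition pm_rel (V : finType) (e e' : V * V) : bool :=
  (head e == head e') || (tail e == tail e').

(* e and e' are two (distinct) edges of a common triangle of the graph *)
Definition tri_rel (V : finType) (adj : rel V) (e e' : V * V) : bool :=
  let S := [set e.1; e.2; e'.1; e'.2] in
  [&& e != e', #|S| == 3 & [forall x in S, forall y in S, (x != y) ==> adj x y]].

Definition hcoef (R : numDomainType) (V : finType) (adj : rel V)
    (e e' : V * V) : R :=
  (if e == e' then (ntri adj e + 2)%N%:R
  else if lr_rel e e' && ~~ tri_rel adj e e' then -1
  else if pm_rel e e' && ~~ tri_rel adj e e' then 1
  else 0)%R.

Definition helmholtzian (R : numDomainType) (V : finType) (adj o : rel V)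
    : 'M[R]_#|oedges adj o| :=
  \matrix_(i, j) hcoef R adj (enum_val i) (enum_val j).

Definition H_eigenvalues (R : numDomainType) (V : finType) (adj o : rel V)
    (lam : seq R) : Prop :=
  [/\ size lam = #|oedges adj o|,
      sorted (fun x y => y <= x) lam &
      char_poly (helmholtzian R adj o) = \prod_(x <- lam) ('X - x%:P)]%R.

Definition induced (V : finType) (adj : rel V) (S : {set V}) : rel V :=
  fun u v => [&& adj u v, u \in S & v \in S].

Definition kappa (V : finType) (adj : rel V) (S : {set V}) (e : V * V) : nat :=
  ntri adj e - ntri (induced adj S) e.

Definition kappa_max (V : finType) (adj : rel V) (S : {set V}) (o' : rel V) : nat :=
  \max_(e in oedges (induced adj S) o') kappa adj S e.

Definition kappa_min (V : finType) (adj : rel V) (S : {set V}) (o' : rel V) : nat :=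
  \big[minn/kappa_max adj S o']_(e in oedges (induced adj S) o') kappa adj S e.

(* Main.v *)
Require Import Defs.
From HB Require Import structures.
From mathcomp Require Import all_boot all_order all_algebra.
From mathcomp Require Import reals.
From mathcomp Require Import zify complex.
Set Implicit Arguments. Unset Strict Implicit. Unset Printing Implicit Defensive.
Import Order.TTheory GRing.Theory Num.Theory.
Local Open Scope ring_scope.
Local Open Scope sesquilinear_scope.
Definition qf (C : numClosedFieldType) n (M : 'M[C]_n) (x : 'rV[C]_n) : C :=
  (x *m M *m x^t*) 0 0.
Definition nrm2 (C : numClosedFieldType) n (x : 'rV[C]_n) : C := (x *m x^t*) 0 0.

Lemma ctM (C : numClosedFieldType) m n p (A : 'M[C]_(m,n)) (B : 'M[C]_(n,p)) :
  (A *m B)^t* = B^t* *m A^t*.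
Proof. by rewrite trmx_mul map_mxM. Qed.

Lemma nrm2_ge0 (C : numClosedFieldType) n (x : 'rV[C]_n) : 0 <= nrm2 x.
Proof.
rewrite /nrm2 !mxE; apply: sumr_ge0 => j _; rewrite !mxE; exact: mul_conjC_ge0.
Qed.

Lemma nrm2_gt0 (C : numClosedFieldType) n (x : 'rV[C]_n) : x != 0 -> 0 < nrm2 x.
Proof.
move=> xn0; have [j xj] : exists j, x 0 j != 0.
  apply/existsP; apply: contraNT xn0; rewrite negb_exists => /forallP H.
  by apply/eqP/rowP => j; rewrite mxE; apply/eqP; move: (H j); rewrite negbK.
rewrite /nrm2 mxE (bigD1 j) //= ltr_pwDl ?mxE ?mul_conjC_gt0 //.
by apply: sumr_ge0 => i _; rewrite !mxE; exact: mul_conjC_ge0.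
Qed.

Lemma cap_nonzero (C : fieldType) n p q (U : 'M[C]_(p,n)) (W : 'M[C]_(q,n)) :
  (n < \rank U + \rank W)%N -> exists2 x : 'rV[C]_n, x != 0 & (x <= U)%MS && (x <= W)%MS.
Proof.
move=> h; have := mxrank_sum_cap U W; have := rank_leq_col (U + W)%MS.
move=> h1 h2; have : (U :&: W)%MS != 0.
  rewrite -mxrank_eq0; apply/eqP => h3; move: h2; rewrite h3 addn0 => h2.
  by move: h; rewrite -h2 ltnNge h1.
move=> /eqP hne; have [i hi] : exists i, row i (U :&: W)%MS != 0.
  apply/existsP; case/boolP: [exists i, row i (U :&: W)%MS != 0] => // /existsPn H.
  by exfalso; apply: hne; apply/row_matrixP => i; rewrite row0; exact/eqP/negPn/H.
exists (row i (U :&: W)%MS) => //.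
by rewrite !(submx_trans (row_sub i _)) ?capmxSl ?capmxSr.
Qed.
Lemma spec_sub (C : numClosedFieldType) n (M : 'M[C]_n) (J : {set 'I_n}) :
  M \is normalmx ->
  exists U : 'M[C]_(#|J|, n), \rank U = #|J| /\ forall x, (x <= U)%MS ->
   exists w : 'rV[C]_n,
   [/\ forall j, j \notin J -> w 0 j = 0,
      qf M x = \sum_j spectral_diag M 0 j * (w 0 j * (w 0 j)^*) &
      nrm2 x = \sum_j w 0 j * (w 0 j)^*].
Proof.
move=> /orthomx_spectralP hM.
set P := spectralmx M in hM *; set d := spectral_diag M in hM *.
have Pu : P \is unitarymx by exact: spectral_unitarymx.
have PP : P *m P^t* = 1%:M by apply/unitarymxP.
rewrite invmx_unitary // in hM.
pose S := \matrix_(i < #|J|, j < n) ((j == enum_val i)%:R : C).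
have SS : S *m S^t* = 1%:M.
  apply/matrixP => i i'; rewrite !mxE (bigD1 (enum_val i)) //= big1; last first.
    by move=> j /negbTE hj; rewrite !mxE hj mul0r.
  rewrite !mxE eqxx mul1r addr0 (inj_eq enum_val_inj) eq_sym.
  by case: (i' == i); rewrite /= ?conjC1 ?conjC0.
exists (S *m P); split.
  apply: mxrank_unitary; apply/unitarymxP.
  by rewrite ctM mulmxA -(mulmxA S) PP mulmx1 SS.
move=> x /submxP [z ->]; exists (z *m S); split.
- move=> j hj; rewrite !mxE big1 // => i _; rewrite !mxE.
  case: eqP => [e|]; last by rewrite mulr0.
  by move: hj; rewrite e enum_valP.
- rewrite /qf hM !ctM !mulmxA -!(mulmxA _ P) PP mulmx1.
  rewrite mulmx1 -mulmxA -ctM mul_mx_diag mxE.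
  by apply: eq_bigr => j _; rewrite !mxE mulrA (mulrC _ (d 0 j)).
- rewrite /nrm2 !ctM !mulmxA -!(mulmxA _ P) PP mulmx1 -mulmxA -ctM mxE.
  by apply: eq_bigr => j _; rewrite !mxE.
Qed.
Lemma char_poly_similar (F : fieldType) n (P A : 'M[F]_n) : P \in unitmx ->
  char_poly (invmx P *m A *m P) = char_poly A.
Proof.
move=> Pu; rewrite /char_poly /char_poly_mx.
have e : map_mx (@polyC F) (invmx P) *m map_mx (@polyC F) P = 1%:M.
  by rewrite -map_mxM mulVmx // map_mx1.
have h : ('X%:M : 'M[{poly F}]_n) - map_mx polyC (invmx P *m A *m P) =
   map_mx (@polyC F) (invmx P) *m ('X%:M - map_mx polyC A) *m map_mx (@polyC F) P.
  rewrite mulmxBr mulmxBl !map_mxM -[_ *m 'X%:M *m _]mulmxA -scalar_mxC.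
  by rewrite mulmxA e mul1mx.
by rewrite h !det_mulmx mulrAC -det_mulmx e det1 mul1r.
Qed.

Lemma spec_perm (C : numClosedFieldType) n (M : 'M[C]_n) (mu : seq C) :
  M \is normalmx -> char_poly M = \prod_(x <- mu) ('X - x%:P) ->
  perm_eq [seq spectral_diag M 0 j | j <- enum 'I_n] mu.
Proof.
move=> /orthomx_spectralP hM hc; apply: prod_XsubC_eq; rewrite -hc [in RHS]hM.
rewrite char_poly_similar ?spectral_unit // char_poly_trig ?diag_mx_is_trig //.
rewrite big_map big_enum /=; apply: eq_bigr => i _; by rewrite mxE eqxx mulr1n.
Qed.
Lemma ge_trans (C : numDomainType) : transitive (fun x y : C => y <= x).
Proof. by move=> y x z h1 h2; exact: le_trans h2 h1. Qed.

Lemma count_ge_sorted (C : numDomainType) (s : seq C) k :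
  sorted (fun x y => y <= x) s -> (k < size s)%N ->
  (k < count (fun x => (s`_k <= x)%R) s)%N.
Proof.
move: k; elim: s => [|x s IH] [|k] //= hs hk.
  by rewrite lexx.
have hs' := path_sorted hs.
have := IH k hs' hk; have hx : s`_k <= x.
  have := order_path_min (@ge_trans C) hs => /allP; apply; exact: mem_nth.
by rewrite hx /= add1n ltnS.
Qed.

Lemma count_le_sorted (C : numDomainType) (s : seq C) k :
  sorted (fun x y => y <= x) s -> (k < size s)%N ->
  (size s - k <= count (fun x => (x <= s`_k)%R) s)%N.
Proof.
move: k; elim: s => [|x s IH] [|k] //= hs hk.
  rewrite lexx.
  have := order_path_min (@ge_trans C) hs => /allP H.
  have -> : count (fun y => y <= x) s = size s.
    by apply/eqP; rewrite -all_count; apply/allP.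
  by rewrite subn0.
have hs' := path_sorted hs.
have := IH k hs' hk; rewrite subSS => h; apply: leq_trans h _; exact: leq_addl.
Qed.

Lemma card_set_count (T : finType) (C : Type) (f : T -> C) (P : pred C) :
  #|[set j | P (f j)]| = count P [seq f j | j <- enum T].
Proof. rewrite count_map cardsE cardE enumT /enum_mem size_filter; exact: eq_count. Qed.

Lemma cf_up (C : numClosedFieldType) n (M : 'M[C]_n) (mu : seq C) k :
  M \is normalmx -> char_poly M = \prod_(x <- mu) ('X - x%:P) ->
  sorted (fun x y => y <= x) mu -> (k < n)%N ->
  exists p, exists U : 'M[C]_(p, n), (k < \rank U)%N /\
    forall x, (x <= U)%MS -> mu`_k * nrm2 x <= qf M x.
Proof.
move=> hN hc hs hk; have hp := spec_perm hN hc.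
have hsz : size mu = n by rewrite -(perm_size hp) size_map size_enum_ord.
have [U [hr hU]] := spec_sub [set j | mu`_k <= spectral_diag M 0 j] hN.
exists _, U; split.
  rewrite hr (card_set_count (fun j => spectral_diag M 0 j) (fun x => mu`_k <= x)) (permP hp); apply: count_ge_sorted => //; by rewrite hsz.
move=> x /hU [w [h0 -> ->]]; rewrite mulr_sumr -subr_ge0 -sumrB.
apply: sumr_ge0 => j _; rewrite -mulrBl.
case: (boolP (j \in [set j | mu`_k <= spectral_diag M 0 j])) => hj.
  apply: mulr_ge0; last exact: mul_conjC_ge0.
  by rewrite subr_ge0; move: hj; rewrite inE.
by rewrite h0 // mul0r mulr0.
Qed.

Lemma cf_down (C : numClosedFieldType) n (M : 'M[C]_n) (mu : seq C) k :
  M \is normalmx -> char_poly M = \prod_(x <- mu) ('X - x%:P) ->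
  sorted (fun x y => y <= x) mu -> (k < n)%N ->
  exists p, exists U : 'M[C]_(p, n), (n - k <= \rank U)%N /\
    forall x, (x <= U)%MS -> qf M x <= mu`_k * nrm2 x.
Proof.
move=> hN hc hs hk; have hp := spec_perm hN hc.
have hsz : size mu = n by rewrite -(perm_size hp) size_map size_enum_ord.
have [U [hr hU]] := spec_sub [set j | spectral_diag M 0 j <= mu`_k] hN.
exists _, U; split.
  rewrite hr (card_set_count (fun j => spectral_diag M 0 j) (fun x => x <= mu`_k)) (permP hp) -{1}hsz; apply: count_le_sorted => //; by rewrite hsz.
move=> x /hU [w [h0 -> ->]]; rewrite mulr_sumr -subr_ge0 -sumrB.
apply: sumr_ge0 => j _; rewrite -mulrBl.
case: (boolP (j \in [set j | spectral_diag M 0 j <= mu`_k])) => hj.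
  apply: mulr_ge0; last exact: mul_conjC_ge0.
  by rewrite subr_ge0; move: hj; rewrite inE.
by rewrite h0 // mul0r mulr0.
Qed.

Lemma cf_ge (C : numClosedFieldType) n (M : 'M[C]_n) (mu : seq C) k p
    (U : 'M[C]_(p, n)) c :
  M \is normalmx -> char_poly M = \prod_(x <- mu) ('X - x%:P) ->
  sorted (fun x y => y <= x) mu -> (k < n)%N -> (k < \rank U)%N ->
  (forall x, (x <= U)%MS -> c * nrm2 x <= qf M x) -> c <= mu`_k.
Proof.
move=> hN hc hs hk hr hU.
have [q [W [hW1 hW2]]] := cf_down hN hc hs hk.
have [|x xn0 /andP [xU xW]] := @cap_nonzero _ _ _ _ U W; first by lia.
have h := le_trans (hU x xU) (hW2 x xW).
have hx := nrm2_gt0 xn0.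
by rewrite -subr_ge0 -(pmulr_lge0 _ hx) mulrBl subr_ge0.
Qed.

Lemma cf_le (C : numClosedFieldType) n (M : 'M[C]_n) (mu : seq C) k p
    (U : 'M[C]_(p, n)) c :
  M \is normalmx -> char_poly M = \prod_(x <- mu) ('X - x%:P) ->
  sorted (fun x y => y <= x) mu -> (k < n)%N -> (n - k <= \rank U)%N ->
  (forall x, (x <= U)%MS -> qf M x <= c * nrm2 x) -> mu`_k <= c.
Proof.
move=> hN hc hs hk hr hU.
have [q [W [hW1 hW2]]] := cf_up hN hc hs hk.
have [|x xn0 /andP [xU xW]] := @cap_nonzero _ _ _ _ U W; first by lia.
have h := le_trans (hW2 x xW) (hU x xU).
have hx := nrm2_gt0 xn0.
by rewrite -subr_ge0 -(pmulr_lge0 _ hx) mulrBl subr_ge0.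
Qed.
Definition flip (V : finType) (e : V * V) : V * V := (e.2, e.1).

Lemma tri_rel_sym (V : finType) (adj : rel V) e e' :
  tri_rel adj e e' = tri_rel adj e' e.
Proof.
rewrite /tri_rel eq_sym.
have -> : [set e'.1; e'.2; e.1; e.2] = [set e.1; e.2; e'.1; e'.2].
  by apply/setP => x; rewrite !inE; case: (x == e.1); case: (x == e.2); case: (x == e'.1); case: (x == e'.2).
by [].
Qed.

Lemma hcoef_sym (R : numDomainType) (V : finType) (adj : rel V) e e' :
  hcoef R adj e e' = hcoef R adj e' e.
Proof.
rewrite /hcoef eq_sym tri_rel_sym /lr_rel /pm_rel /Defs.head /Defs.tail /=.
case: eqP => [->|_] //; by rewrite (orbC (e.2 == _)) (eq_sym e.2 e'.2) (eq_sym e.1 e'.1).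
Qed.

Lemma tri_rel_flip (V : finType) (adj : rel V) e e' :
  flip e != e' -> e != e' -> tri_rel adj (flip e) e' = tri_rel adj e e'.
Proof.
move=> h1 h2; rewrite /tri_rel h1 h2 /=.
have -> : [set (flip e).1; (flip e).2; e'.1; e'.2] = [set e.1; e.2; e'.1; e'.2].
  by apply/setP => x; rewrite !inE /=; case: (x == e.1); case: (x == e.2); case: (x == e'.1); case: (x == e'.2).
by [].
Qed.

Lemma hcoef_flip (R : numDomainType) (V : finType) (adj : rel V) e e' :
  e.1 != e.2 -> e'.1 != e'.2 -> flip e != e' -> e != e' ->
  hcoef R adj (flip e) e' = - hcoef R adj e e'.
Proof.
move=> n1 n2 h1 h2; rewrite /hcoef (negbTE h1) (negbTE h2) tri_rel_flip //.
case: (tri_rel adj e e'); rewrite ?andbF ?oppr0 //= !andbT.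
rewrite /lr_rel /pm_rel /Defs.head /Defs.tail /=.
case: e n1 h1 h2 => u v /= n1 _ _; case: e' n2 => x y /= n2.
have H1 : ~~ ((v == x) && (v == y)).
  by apply/negP => /andP [/eqP e1 /eqP e2]; move: n2; rewrite -e1 -e2 eqxx.
have H2 : ~~ ((v == x) && (u == x)).
  by apply/negP => /andP [/eqP e1 /eqP e2]; move: n1; rewrite e1 e2 eqxx.
have H3 : ~~ ((y == u) && (v == y)).
  by apply/negP => /andP [/eqP e1 /eqP e2]; move: n1; rewrite e2 e1 eqxx.
have H4 : ~~ ((y == u) && (u == x)).
  by apply/negP => /andP [/eqP e1 /eqP e2]; move: n2; rewrite e1 e2 eqxx.
rewrite (eq_sym y v) (eq_sym u y).
move: H1 H2 H3 H4; case: (v == x); case: (v == y); case: (y == u); case: (u == x);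
  by rewrite //= ?opprK ?oppr0.
Qed.

Definition ok (V : finType) (e e' : V * V) :=
  [&& e.1 != e.2, e'.1 != e'.2, e != e' & flip e != e'].

Definition gE (V : finType) (o : rel V) (e : V * V) := if o e.1 e.2 then e else flip e.
Definition sgn (R : numDomainType) (V : finType) (o : rel V) (e : V * V) : R :=
  if o e.1 e.2 then 1 else -1.

Lemma flipK (V : finType) : involutive (@flip V).
Proof. by case. Qed.

Lemma ok_sym (V : finType) (e e' : V * V) : ok e e' -> ok e' e.
Proof.
case/and4P => h1 h2 h3 h4; apply/and4P; split => //; first by rewrite eq_sym.
apply: contra h4 => /eqP <-; by rewrite flipK.
Qed.

Lemma ok_flip (V : finType) (e e' : V * V) : ok e e' -> ok (flip e) e'.
Proof.
case/and4P => h1 h2 h3 h4; apply/and4P; split => //. all: try by rewrite flipK. by rewrite /= eq_sym.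
Qed.

Lemma ok_g (V : finType) o (e e' : V * V) : ok e e' -> ok (gE o e) e'.
Proof. rewrite /gE; case: (o _ _) => //; exact: ok_flip. Qed.

Lemma hg1 (R : numDomainType) (V : finType) (adj o : rel V) e e' : ok e e' ->
  sgn R o e * hcoef R adj (gE o e) e' = hcoef R adj e e'.
Proof.
case/and4P => h1 h2 h3 h4; rewrite /sgn /gE; case: (o _ _); first by rewrite mul1r.
by rewrite (hcoef_flip R adj h1 h2 h4 h3) mulN1r opprK.
Qed.

Lemma hg2 (R : numDomainType) (V : finType) (adj o : rel V) e e' : ok e e' ->
  sgn R o e' * hcoef R adj e (gE o e') = hcoef R adj e e'.
Proof.
move=> h; rewrite (hcoef_sym R adj e (gE o e')) (hg1 R adj o (ok_sym h)); exact: hcoef_sym.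
Qed.

Lemma hg12 (R : numDomainType) (V : finType) (adj o : rel V) e e' : ok e e' ->
  sgn R o e' * (sgn R o e * hcoef R adj (gE o e) (gE o e')) = hcoef R adj e e'.
Proof.
move=> h; rewrite mulrCA (hg2 R adj o (ok_g o h)); exact: hg1.
Qed.

Lemma ntri_flip (V : finType) (adj : rel V) e : ntri adj (flip e) = ntri adj e.
Proof. by rewrite /ntri /flip /=; apply: eq_card => w; rewrite !inE andbC. Qed.

Lemma hgd (R : numDomainType) (V : finType) (adj o : rel V) e :
  sgn R o e * (sgn R o e * hcoef R adj (gE o e) (gE o e)) = hcoef R adj e e.
Proof.
have hd : forall f, hcoef R adj f f = (ntri adj f + 2)%:R.
  by move=> f; rewrite /hcoef eqxx.
rewrite /sgn /gE; case: (o _ _); first by rewrite !mul1r.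
by rewrite mulN1r mulN1r opprK !hd ntri_flip.
Qed.

Lemma inS4 (V : finType) (S : {set V}) a b c d x :
  a \in S -> b \in S -> c \in S -> d \in S -> x \in [set a; b; c; d] -> x \in S.
Proof.
move=> ha hb hc hd; rewrite !inE.
by do 4 (case: eqP => [->//|_]).
Qed.

Lemma tri_rel_ind (V : finType) (adj : rel V) (S : {set V}) e e' :
  e.1 \in S -> e.2 \in S -> e'.1 \in S -> e'.2 \in S ->
  tri_rel adj e e' = tri_rel (induced adj S) e e'.
Proof.
move=> ha hb hc hd; rewrite /tri_rel; congr [&& _, _ & _].
apply: eq_forallb => x; case hx : (x \in _) => //=.
apply: eq_forallb => y; case hy : (y \in _) => //=.
by rewrite /induced (inS4 ha hb hc hd hx) (inS4 ha hb hc hd hy) !andbT.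
Qed.

Lemma hcoef_ind (R : numDomainType) (V : finType) (adj : rel V) (S : {set V}) e e' :
  e.1 \in S -> e.2 \in S -> e'.1 \in S -> e'.2 \in S -> e != e' ->
  hcoef R adj e e' = hcoef R (induced adj S) e e'.
Proof.
move=> ha hb hc hd hne; by rewrite /hcoef (negbTE hne) (tri_rel_ind adj ha hb hc hd).
Qed.

Lemma ntri_ind (V : finType) (adj : rel V) (S : {set V}) e :
  (ntri (induced adj S) e <= ntri adj e)%N.
Proof.
apply: subset_leq_card; apply/subsetP => w; rewrite !inE /induced.
by case/andP => /and3P [-> _ _] /and3P [-> _ _].
Qed.

Definition Emb (R : numDomainType) (V : finType) (adj : rel V) (S : {set V}) (o o' : rel V)
  : 'M[R]_(#|oedges (induced adj S) o'|, #|oedges adj o|) :=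
  \matrix_(j, a) if enum_val a == gE o (enum_val j) then sgn R o (enum_val j) else 0.

Lemma memE' (V : finType) (adj : rel V) (S : {set V}) o' e :
  e \in oedges (induced adj S) o' -> [/\ adj e.1 e.2, e.1 \in S, e.2 \in S & o' e.1 e.2].
Proof. by rewrite inE /induced => /andP [/and3P [-> -> ->] ->]. Qed.

Lemma gE_in (V : finType) (adj o : rel V) e :
  simple_graph adj -> orientation adj o -> adj e.1 e.2 -> gE o e \in oedges adj o.
Proof.
move=> [sy ir] [oa ox] he; rewrite /gE inE; case h : (o e.1 e.2) => /=.
  by rewrite he h.
have := ox _ _ he; rewrite h /= => ->; by rewrite sy he.
Qed.

Lemma ok_E' (V : finType) (adj : rel V) (S : {set V}) o' e e' :
  simple_graph adj -> orientation (induced adj S) o' ->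
  e \in oedges (induced adj S) o' -> e' \in oedges (induced adj S) o' -> e != e' -> ok e e'.
Proof.
move=> [sy ir] [oa ox] he he' hne.
have [a1 s1 s2 o1] := memE' he; have [a2 s3 s4 o2] := memE' he'.
apply/and4P; split => //.
- by apply: contraTneq a1 => ->; rewrite ir.
- by apply: contraTneq a2 => ->; rewrite ir.
apply/negP => /eqP hf; move: o2; rewrite -hf /= => o2.
have : induced adj S e.1 e.2 by rewrite /induced a1 s1 s2.
by move=> /ox; rewrite o1 o2.
Qed.

Lemma gE_inj (V : finType) (adj : rel V) (S : {set V}) o o' e e' :
  simple_graph adj -> orientation (induced adj S) o' ->
  e \in oedges (induced adj S) o' -> e' \in oedges (induced adj S) o' ->
  gE o e = gE o e' -> e = e'.
Proof.
move=> hs ho he he' hg; apply/eqP; case: (boolP (e == e')) => // hne.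
have := ok_E' hs ho he he' hne => /and4P [_ _ h3 h4].
have h5 : flip e' != e by apply: contra h4 => /eqP <-; rewrite flipK.
move: hg; rewrite /gE; case: (o e.1 e.2); case: (o e'.1 e'.2) => h.
- by move: h3; rewrite h eqxx.
- by move: h5; rewrite h eqxx.
- by move: h4; rewrite h eqxx.
- by move: h3; rewrite -(flipK e) h flipK eqxx.
Qed.

Lemma sumE (R : numDomainType) (V : finType) (adj : rel V) (S : {set V}) o o' j
  (F : 'I_#|oedges adj o| -> R) a0 :
  enum_val a0 = gE o (enum_val j) ->
  \sum_a Emb R adj S o o' j a * F a = sgn R o (enum_val j) * F a0.
Proof.
move=> ha0; rewrite (bigD1 a0) //= big1 ?addr0.
  by rewrite mxE ha0 eqxx.
move=> a ha; rewrite mxE; case: eqP => h; last by rewrite mul0r.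
by move: ha; rewrite -ha0 in h; rewrite (enum_val_inj h) eqxx.
Qed.

Lemma exists_a0 (V : finType) (adj : rel V) (S : {set V}) o o' (j : 'I_#|oedges (induced adj S) o'|) :
  simple_graph adj -> orientation adj o ->
  exists a0 : 'I_#|oedges adj o|, enum_val a0 = gE o (enum_val j).
Proof.
move=> hs ho; have [a1 _ _ _] := memE' (enum_valP j).
have hin := gE_in hs ho a1.
by exists (enum_rank_in hin (gE o (enum_val j))); rewrite enum_rankK_in.
Qed.

Lemma sgn2 (R : numDomainType) (V : finType) (o : rel V) e : sgn R o e * sgn R o e = 1.
Proof. by rewrite /sgn; case: (o _ _); rewrite ?mulr1 ?mulrNN ?mulr1. Qed.

Lemma hcoef_diag (R : numDomainType) (V : finType) (adj : rel V) f :
  hcoef R adj f f = (ntri adj f + 2)%:R.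
Proof. by rewrite /hcoef eqxx. Qed.

Lemma EE (R : numDomainType) (V : finType) (adj : rel V) (S : {set V}) o o' :
  simple_graph adj -> orientation adj o -> orientation (induced adj S) o' ->
  Emb R adj S o o' *m (Emb R adj S o o')^T = 1%:M.
Proof.
move=> hs ho ho'; apply/matrixP => j l; rewrite [in LHS]mxE [in RHS]mxE.
have [a0 ha0] := exists_a0 l hs ho.
have hT : forall b, (Emb R adj S o o')^T b l = Emb R adj S o o' l b by move=> b; rewrite mxE.
under eq_bigr => b _ do rewrite hT mulrC.
rewrite (sumE _ ha0) mxE ha0.
case: (eqVneq j l) => [<-|hjl].
  by rewrite eqxx sgn2.
have -> : (gE o (enum_val l) == gE o (enum_val j)) = false.
  apply/negP => /eqP h; move: hjl; rewrite (enum_val_inj (gE_inj hs ho' (enum_valP l) (enum_valP j) h)).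
  by rewrite eqxx.
by rewrite mulr0.
Qed.

Lemma EAE (R : numDomainType) (V : finType) (adj : rel V) (S : {set V}) o o' :
  simple_graph adj -> orientation adj o -> orientation (induced adj S) o' ->
  Emb R adj S o o' *m helmholtzian R adj o *m (Emb R adj S o o')^T =
  helmholtzian R (induced adj S) o' + diag_mx (\row_j ((kappa adj S (enum_val j))%:R)).
Proof.
move=> hs ho ho'; apply/matrixP => j l; rewrite [in LHS]mxE.
have [a0 ha0] := exists_a0 l hs ho.
have [a1 ha1] := exists_a0 j hs ho.
have hT : forall b, (Emb R adj S o o')^T b l = Emb R adj S o o' l b by move=> b; rewrite mxE.
under eq_bigr => b _ do rewrite hT mulrC.
rewrite (sumE _ ha0) [in LHS]mxE.
rewrite (sumE _ ha1) mxE ha0 ha1.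
have [b1 s1 s2 _] := memE' (enum_valP j).
have [b2 s3 s4 _] := memE' (enum_valP l).
case: (eqVneq j l) => [<-|hjl].
  rewrite hgd !mxE eqxx mulr1n !hcoef_diag -natrD /kappa addnAC subnKC //.
  exact: ntri_ind.
have hne : enum_val j != enum_val l by rewrite (inj_eq enum_val_inj).
rewrite (hg12 R adj o (ok_E' hs ho' (enum_valP j) (enum_valP l) hne)).
by rewrite !mxE (negbTE hjl) mulr0n addr0 (hcoef_ind R adj s1 s2 s3 s4 hne).
Qed.

Lemma transfer (C : numClosedFieldType) p m' m (U' : 'M[C]_(p, m')) (E : 'M[C]_(m', m))
  (Ac : 'M[C]_m) (G : 'M[C]_m') :
  E *m E^t* = 1%:M -> E *m Ac *m E^t* = G ->
  \rank (U' *m E) = \rank U' /\ forall x, (x <= U' *m E)%MS ->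
    exists2 y, (y <= U')%MS & qf Ac x = qf G y /\ nrm2 x = nrm2 y.
Proof.
move=> hE hG; split.
  apply: mxrankMfree; rewrite /row_free mxrank_unitary //; exact/unitarymxP.
move=> x /submxP [z ->]; exists (z *m U'); first exact: submxMl.
rewrite /qf /nrm2 -!mulmxA !ctM !mulmxA; split.
  by rewrite -hG -!mulmxA.
by rewrite -(mulmxA _ E) hE mulmx1.
Qed.

Lemma qfD (C : numClosedFieldType) n (G K : 'M[C]_n) y : qf (G + K) y = qf G y + qf K y.
Proof. by rewrite /qf mulmxDr mulmxDl mxE. Qed.

Lemma qf_diag (C : numClosedFieldType) n (k : 'rV[C]_n) y :
  qf (diag_mx k) y = \sum_j k 0 j * (y 0 j * (y 0 j)^*).
Proof.
rewrite /qf mul_mx_diag mxE; apply: eq_bigr => j _; rewrite !mxE.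
by rewrite mulrA (mulrC _ (k 0 j)).
Qed.

Lemma qf_diag_ge (C : numClosedFieldType) n (k : 'rV[C]_n) a y :
  (forall j, a <= k 0 j) -> a * nrm2 y <= qf (diag_mx k) y.
Proof.
move=> h; rewrite qf_diag /nrm2 mxE mulr_sumr -subr_ge0 -sumrB; apply: sumr_ge0 => j _.
rewrite !mxE -mulrBl; apply: mulr_ge0; [by rewrite subr_ge0 | exact: mul_conjC_ge0].
Qed.

Lemma qf_diag_le (C : numClosedFieldType) n (k : 'rV[C]_n) b y :
  (forall j, k 0 j <= b) -> qf (diag_mx k) y <= b * nrm2 y.
Proof.
move=> h; rewrite qf_diag /nrm2 mxE mulr_sumr -subr_ge0 -sumrB; apply: sumr_ge0 => j _.
rewrite !mxE -mulrBl; apply: mulr_ge0; [by rewrite subr_ge0 | exact: mul_conjC_ge0].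
Qed.

Lemma bigmin_le (T : finType) (A : {pred T}) (F : T -> nat) x0 e :
  e \in A -> ((\big[minn/x0]_(e in A) F e) <= F e)%N.
Proof.
move=> he; have : e \in index_enum T by rewrite mem_index_enum.
elim: (index_enum T) => [//|x s IH]; rewrite inE big_cons => /orP [/eqP <-|hs].
  by rewrite he geq_minl.
case: (x \in A); last exact: IH.
by apply: leq_trans (geq_minr _ _) (IH hs).
Qed.

Lemma ct_real (R : realType) n m (B : 'M[R]_(n, m)) :
  (map_mx (real_complex R) B)^t* = map_mx (real_complex R) B^T.
Proof.
apply/matrixP => i j; rewrite !mxE; apply: conj_Creal; by rewrite complex_real.
Qed.

Lemma helm_sym (R : numDomainType) (V : finType) (adj o : rel V) :
  (helmholtzian R adj o)^T = helmholtzian R adj o.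
Proof. by apply/matrixP => i j; rewrite !mxE hcoef_sym. Qed.

Lemma setup (R : realType) (V : finType) (adj o : rel V) (lam : seq R) :
  H_eigenvalues adj o lam ->
  let Ac := map_mx (real_complex R) (helmholtzian R adj o) in
  [/\ Ac^t* = Ac, Ac \is normalmx,
      char_poly Ac = \prod_(x <- map (real_complex R) lam) ('X - x%:P) &
      sorted (fun x y => y <= x) (map (real_complex R) lam)].
Proof.
move=> [hsz hs hc] Ac.
have hA : Ac^t* = Ac by rewrite ct_real helm_sym.
split => //.
- by apply/normalmxP; rewrite hA.
- rewrite -map_char_poly hc rmorph_prod big_map; apply: eq_bigr => x _.
  by rewrite rmorphB /= map_polyX map_polyC.
- rewrite sorted_map; apply: sub_sorted hs => x y; by rewrite /relpre /= lecR.
Qed.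

Lemma nth_rc (R : realType) (s : seq R) k :
  (map (real_complex R) s)`_k = real_complex R s`_k.
Proof.
elim: s k => [|x s IH] [|k] //=; by rewrite rmorph0.
Qed.

Lemma main_aux (R : realType) (V : finType) (adj : rel V) (S : {set V})
    (o o' : rel V) (lam lam' : seq R) :
  simple_graph adj ->
  orientation adj o ->
  orientation (induced adj S) o' ->
  (1 <= #|oedges adj o|)%N ->
  (1 <= #|oedges (induced adj S) o'|)%N ->
  H_eigenvalues adj o lam ->
  H_eigenvalues (induced adj S) o' lam' ->
  forall i : nat, (i < #|oedges (induced adj S) o'|)%N ->
    lam`_i >= lam'`_i + (kappa_min adj S o')%:R /\
    lam'`_i + (kappa_max adj S o')%:R
      >= lam`_(#|oedges adj o| - #|oedges (induced adj S) o'| + i).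
Proof.
move=> hs ho ho' hm hm' hE hE' i hi.
have [hszl _ _] := hE; have [hszl' _ _] := hE'.
have [hA hNA hcA hsA] := setup hE; have [hH hNH hcH hsH] := setup hE'.
set Ac := map_mx (real_complex R) (helmholtzian R adj o) in hA hNA hcA.
set Hc := map_mx (real_complex R) (helmholtzian R (induced adj S) o') in hH hNH hcH.
pose Ec := map_mx (real_complex R) (Emb R adj S o o').
pose kap : 'rV[R]_#|oedges (induced adj S) o'| := \row_j ((kappa adj S (enum_val j))%:R : R).
have hEE : Ec *m Ec^t* = 1%:M by rewrite ct_real -map_mxM EE // map_mx1.
have hEAE : Ec *m Ac *m Ec^t* = Hc + diag_mx (map_mx (real_complex R) kap).
  by rewrite ct_real -!map_mxM EAE // map_mxD map_diag_mx.
have hmm : (#|oedges (induced adj S) o'| <= #|oedges adj o|)%N.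
  have hEu : Ec \is unitarymx by apply/unitarymxP.
  by rewrite -(mxrank_unitary hEu) rank_leq_col.
have him : (i < #|oedges adj o|)%N by exact: leq_trans hi hmm.
have kmin_le : forall j, ((kappa_min adj S o')%:R : R[i]) <= (map_mx (real_complex R) kap) 0 j.
  move=> j; rewrite !mxE rmorph_nat ler_nat; exact: bigmin_le (enum_valP j).
have kmax_ge : forall j, (map_mx (real_complex R) kap) 0 j <= ((kappa_max adj S o')%:R : R[i]).
  move=> j; rewrite !mxE rmorph_nat ler_nat; exact: leq_bigmax_cond (enum_valP j).
split.
  have [p [U' [hr hU]]] := cf_up hNH hcH hsH hi.
  have [hrk hx] := transfer U' hEE hEAE.
  have h1 := @cf_ge _ _ Ac _ i _ (U' *m Ec)
     ((map (real_complex R) lam')`_i + (kappa_min adj S o')%:R) hNA hcA hsA him.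
  have := h1 ltac:(by rewrite hrk).
  have hh : forall x, (x <= U' *m Ec)%MS ->
      ((map (real_complex R) lam')`_i + (kappa_min adj S o')%:R) * nrm2 x <= qf Ac x.
    move=> x hxU; have [y hy [-> ->]] := hx x hxU.
    rewrite qfD mulrDl; apply: lerD; first exact: hU.
    exact: qf_diag_ge.
  move=> /(_ hh).
  rewrite !nth_rc -(rmorph_nat (real_complex R)).
  by rewrite -rmorphD lecR.
have [p [W' [hr hW]]] := cf_down hNH hcH hsH hi.
have [hrk hx] := transfer W' hEE hEAE.
have hk2 : (#|oedges adj o| - #|oedges (induced adj S) o'| + i < #|oedges adj o|)%N.
  by lia.
have h2 := @cf_le _ _ Ac _ _ _ (W' *m Ec)
     ((map (real_complex R) lam')`_i + (kappa_max adj S o')%:R) hNA hcA hsA hk2.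
have := h2 ltac:(by rewrite hrk; lia).
have hh : forall x, (x <= W' *m Ec)%MS ->
    qf Ac x <= ((map (real_complex R) lam')`_i + (kappa_max adj S o')%:R) * nrm2 x.
  move=> x hxU; have [y hy [-> ->]] := hx x hxU.
  rewrite qfD mulrDl; apply: lerD; first exact: hW.
  exact: qf_diag_le.
move=> /(_ hh).
rewrite !nth_rc -(rmorph_nat (real_complex R)).
by rewrite -rmorphD lecR.
Qed.

Local Close Scope sesquilinear_scope.
Unset Implicit Arguments.

Theorem theorem4p2 (R : realType) (V : finType) (adj : rel V) (S : {set V})
    (o o' : rel V) (lam lam' : seq R) :
  simple_graph adj ->
  orientation adj o ->
  orientation (induced adj S) o' ->
  (1 <= #|oedges adj o|)%N ->
  (1 <= #|oedges (induced adj S) o'|)%N ->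
  H_eigenvalues adj o lam ->
  H_eigenvalues (induced adj S) o' lam' ->
  forall i : nat, (i < #|oedges (induced adj S) o'|)%N ->
    lam`_i >= lam'`_i + (kappa_min adj S o')%:R /\
    lam'`_i + (kappa_max adj S o')%:R
      >= lam`_(#|oedges adj o| - #|oedges (induced adj S) o'| + i).
Proof. exact: main_aux. Qed.
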